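(* Let $\mathcal V$ be a vector space partition of $\mathbb F_2^{10}$ such that $\dim(V)$ is even for all $V\in\mathcal V$. Then $\mathcal V$ has one of the types $[10^1]$; $[2^{256},8^1]$; $[2^{320-5i},4^i,6^1]$ for some $0\le i\le64$; or $[2^{341-5i},4^i]$ for some $0\le i\le66$. Vector space partitions of $\mathbb F_2^{10}$ of each of these types exist, except possibly of type $[2^{11},4^{66}]$.
   Context: A vector space partition of $\mathbb F_2^n$ is a set of nonzero subspaces such that every nonzero vector lies in exactly one of them. It has type $[d_1^{n_1},\dots,d_k^{n_k}]$ (with $d_1<\dots<d_k$) if it contains exactly $n_i$ subspaces of dimension $d_i$ and no others. *)

(* Defs.v *)
From HB Require Import structures.
From mathcomp Require Import all_boot all_order all_algebra.
Set Implicit Arguments. Unset Strict Implicit. Unset Printing Implicit Defensive.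
Import GRing.Theory.
Local Open Scope ring_scope.

(* Ambient space F_2^n, vectors are row vectors 'rV['F_2]_n.
   Subspaces are represented by their sets of vectors. *)
Notation vec n := 'rV['F_2]_n.

Definition span n (A : {set vec n}) : 'M['F_2]_n :=
  (\sum_(v in A) <<v>>)%MS.

Definition is_subspace n (A : {set vec n}) : Prop :=
  A = [set v : vec n | (v <= span A)%MS].

Definition sdim n (A : {set vec n}) : nat := \rank (span A).

Definition vs_partition n (P : {set {set vec n}}) : Prop :=
  (forall A, A \in P -> is_subspace A /\ (0 < sdim A)%N) /\
  (forall v : vec n, v != 0 -> exists! A, A \in P /\ v \in A).

Definition ndim n (P : {set {set vec n}}) (d : nat) : nat :=
  #|[set A in P | sdim A == d]|.

(* The type [d_1^{n_1}, ..., d_k^{n_k}], given as a list of pairs (d_i, n_i)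
   with distinct d_i: exactly n_i members of dimension d_i and no others. *)
Definition has_type n (P : {set {set vec n}}) (t : seq (nat * nat)) : Prop :=
  forall d, ndim P d = (\sum_(p <- t | p.1 == d) p.2)%N.

(* Main.v *)
Require Import Defs.
From mathcomp Require Import all_boot all_order all_algebra.
From mathcomp Require Import zify.
Set Implicit Arguments. Unset Strict Implicit. Unset Printing Implicit Defensive.
Import GRing.Theory.
Local Open Scope ring_scope.

Lemma F2_case (x : 'F_2) : x = 0 \/ x = 1.
Proof. by case: x => [[|[|m]] Hm] //; [left|right]; apply/val_inj. Qed.

Lemma F2_addxx (x : 'F_2) : x + x = 0.
Proof. by have [->|->] := F2_case x; rewrite ?addr0 //; apply/val_inj. Qed.

Lemma F2_eq1 (x : 'F_2) : x = (x == 1)%:R.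
Proof. by have [->|->] := F2_case x. Qed.

Lemma mx_addxx m n (A : 'M['F_2]_(m, n)) : A + A = 0.
Proof. by apply/matrixP => i j; rewrite !mxE F2_addxx. Qed.

Lemma mx_oppF2 m n (A : 'M['F_2]_(m, n)) : - A = A.
Proof. by rewrite -[LHS]addr0 -(mx_addxx A) addrA addNr add0r. Qed.

Lemma F2_nat k : (k%:R : 'F_2) = (odd k)%:R.
Proof.
elim: k => // k IH; rewrite -natr1 IH /=.
by case: (odd k) => /=; rewrite ?add0r //; apply/val_inj.
Qed.

Lemma F2_mulb (a b : bool) : (a%:R * b%:R : 'F_2) = (a && b)%:R.
Proof. by case: a; case: b; rewrite ?mulr0 ?mul0r ?mulr1. Qed.

Lemma F2_addb (a b : bool) : (a%:R + b%:R : 'F_2) = (a (+) b)%:R.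
Proof. by case: a; case: b; rewrite ?addr0 ?add0r //= F2_addxx. Qed.

Lemma F2_nat_inj (a b : bool) : (a%:R : 'F_2) = b%:R -> a = b.
Proof. by case: a; case: b. Qed.

Definition oddsum (m : nat) (f : nat -> bool) : bool := odd (count f (iota 0 m)).

Lemma sum_count (s : seq nat) (f : nat -> bool) :
  (\sum_(i <- s) (f i : nat))%N = count f s.
Proof. by elim: s => [|x s IH]; rewrite ?big_nil ?big_cons ?IH. Qed.

Lemma sumF2 m (f : nat -> bool) :
  \sum_(i < m) (f i)%:R = (oddsum m f)%:R :> 'F_2.
Proof.
rewrite -natr_sum F2_nat /oddsum; congr (odd _)%:R.
by rewrite -(big_mkord xpredT (fun i => (f i : nat))) /index_iota subn0 sum_count.
Qed.

Definition bits n (v : 'rV['F_2]_n) : seq bool := [seq v 0 i == 1 | i <- enum 'I_n].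

Lemma size_bits n (v : 'rV['F_2]_n) : size (bits v) = n.
Proof. by rewrite size_map size_enum_ord. Qed.

Lemma nth_bits n (v : 'rV['F_2]_n) (i : 'I_n) : nth false (bits v) i = (v 0 i == 1).
Proof. by rewrite (nth_map i) ?size_enum_ord // nth_ord_enum. Qed.

Lemma rowF2E n (v : 'rV['F_2]_n) (i : 'I_1) (j : 'I_n) : v i j = (nth false (bits v) j)%:R.
Proof. by rewrite nth_bits (ord1 i) -F2_eq1. Qed.

Lemma bits0 n (v : 'rV['F_2]_n) : all negb (bits v) -> v = 0.
Proof.
move=> /allP H; apply/rowP => i; rewrite rowF2E mxE.
by have := H _ (mem_nth false (_ : (i < size (bits v))%N)); rewrite size_bits => /(_ (ltn_ord i)) /negbTE ->.
Qed.

Fixpoint allbits (n : nat) : seq (seq bool) :=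
  if n is n'.+1 then [seq b :: s | b <- [:: false; true], s <- allbits n'] else [:: [::]].

Lemma allbitsP (s : seq bool) : s \in allbits (size s).
Proof.
elim: s => [|b s IH] //=.
by case: b; rewrite !mem_cat ?(map_f (cons true) IH) ?(map_f (cons false) IH) ?orbT.
Qed.

Definition tomx m n (L : seq (seq bool)) : 'M['F_2]_(m, n) :=
  \matrix_(i, j) (nth false (nth [::] L i) j)%:R.

Definition bmm m n p (A B : seq (seq bool)) : seq (seq bool) :=
  mkseq (fun i => mkseq (fun j => oddsum n (fun k => nth false (nth [::] A i) k && nth false (nth [::] B k) j)) p) m.

Lemma tomx_mul m n p A B : (tomx m n A *m tomx n p B) = tomx m p (bmm m n p A B).
Proof.
apply/matrixP => i j; rewrite !mxE !nth_mkseq //.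
rewrite -sumF2; apply: eq_bigr => k _; rewrite !mxE F2_mulb //.
Qed.

Definition badd m n (A B : seq (seq bool)) : seq (seq bool) :=
  mkseq (fun i => mkseq (fun j => nth false (nth [::] A i) j (+) nth false (nth [::] B i) j) n) m.

Lemma tomx_add m n A B : (tomx m n A + tomx m n B) = tomx m n (badd m n A B).
Proof. by apply/matrixP => i j; rewrite !mxE !nth_mkseq // F2_addb. Qed.

Definition bid n : seq (seq bool) := mkseq (fun i => mkseq (fun j => i == j) n) n.

Lemma tomx1 n : tomx n n (bid n) = 1%:M.
Proof. apply/matrixP => i j; rewrite !mxE !nth_mkseq //. Qed.

Lemma tomx0 m n : tomx m n [::] = 0.
Proof. by apply/matrixP => i j; rewrite !mxE !nth_nil. Qed.

Lemma vec_mulE m n (v : 'rV['F_2]_m) L (j : 'I_n) :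
  (v *m tomx m n L) 0 j = (oddsum m (fun k => nth false (bits v) k && nth false (nth [::] L k) j))%:R.
Proof.
rewrite !mxE -sumF2; apply: eq_bigr => k _; rewrite !mxE rowF2E F2_mulb //.
Qed.

Lemma card_vec n : #|[set: vec n]| = (2 ^ n)%N.
Proof. by rewrite cardsT card_mx card_Fp // mul1n. Qed.

Lemma card_rowspace n m (M : 'M['F_2]_(m, n)) :
  #|[set v : vec n | (v <= M)%MS]| = (2 ^ \rank M)%N.
Proof.
have -> : [set v : vec n | (v <= M)%MS] = [set x *m row_base M | x in [set: 'rV_(\rank M)]].
  apply/setP => v; rewrite inE; apply/idP/imsetP.
    by rewrite -(eq_row_base M) => /submxP [D ->]; exists D; rewrite ?inE.
  by move=> [x _ ->]; rewrite -(eq_row_base M) submxMl.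
by rewrite card_imset ?card_vec //; apply: row_free_inj; apply: row_base_free.
Qed.

Lemma subspace_sub n (A : {set vec n}) v : is_subspace A -> (v \in A) = (v <= Defs.span A)%MS.
Proof. by move=> H; rewrite {1}H inE. Qed.

Lemma subspace0 n (A : {set vec n}) : is_subspace A -> 0 \in A.
Proof. by move=> H; rewrite (subspace_sub _ H) sub0mx. Qed.

Lemma subspaceD n (A : {set vec n}) x y : is_subspace A -> x \in A -> y \in A -> x + y \in A.
Proof. by move=> H; rewrite !(subspace_sub _ H); apply: addmx_sub. Qed.

Lemma card_subspace n (A : {set vec n}) : is_subspace A -> #|A| = (2 ^ sdim A)%N.
Proof. by move=> H; rewrite {1}H card_rowspace. Qed.

Lemma sdim_card n (A : {set vec n}) k : is_subspace A -> #|A| = (2 ^ k)%N -> sdim A = k.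
Proof. by move=> H; rewrite card_subspace // => /expnI; apply. Qed.

Lemma sdim_le n (A : {set vec n}) : (sdim A <= n)%N.
Proof. exact: rank_leq_col. Qed.

Lemma subgroup_subspace n (A : {set vec n}) :
  0 \in A -> (forall x y, x \in A -> y \in A -> x + y \in A) -> is_subspace A.
Proof.
move=> A0 AD; apply/setP => v; rewrite inE; apply/idP/idP.
  move=> vA; rewrite /Defs.span (sumsmx_sup v) //; by rewrite genmxE.
move/sub_sumsmxP => [u_ ->].
apply: (big_ind (fun w => w \in A)) => // u uA.
have /sub_rVP [a ->] : (u_ u *m <<u>>%MS <= u)%MS by apply: submx_trans (submxMl _ _) _; rewrite genmxE.
by case: (F2_case a) => ->; rewrite ?scale0r ?scale1r.
Qed.

Lemma card_inter_sum n (A X : {set vec n}) :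
  #|A :&: X| = (\sum_(v in X) (v \in A : nat))%N.
Proof.
rewrite -big_mkcondr /= sum1_card; apply: eq_card => v; by rewrite !inE andbC.
Qed.

Lemma part_count n (P : {set {set vec n}}) (X : {set vec n}) :
  vs_partition P -> (forall v, v \in X -> v != 0) ->
  (\sum_(A in P) #|A :&: X|)%N = #|X|.
Proof.
move=> [_ HP] HX.
under eq_bigr do rewrite card_inter_sum.
rewrite exchange_big /= -sum1_card; apply: eq_bigr => v vX.
have [A0 [[A0P vA0] U]] := HP v (HX v vX).
rewrite -big_mkcondr /= sum1_card; transitivity #|[set A0]|; last exact: cards1.
apply: eq_card => A; rewrite !inE.
apply/idP/eqP; [|by move=> ->; apply/andP].
by move=> /andP [AP vA]; apply/esym/U.
Qed.

Lemma part_total n (P : {set {set vec n}}) :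
  vs_partition P -> (\sum_(A in P) (2 ^ sdim A - 1))%N = (2 ^ n - 1)%N.
Proof.
move=> HP; have := part_count (X := [set~ 0]) HP.
rewrite cardsC1 -cardsT card_vec subn1 => <-; last by move=> v; rewrite !inE.
apply: eq_bigr => A AP; have [sA _] := HP.1 A AP.
rewrite -card_subspace // (cardsD1 0 A) subspace0 //= add1n subn1 /=.
by rewrite setDE setIC.
Qed.

Lemma half_lemma n (G : {set vec n}) (f : vec n -> 'F_2) :
  (forall x y, x \in G -> y \in G -> x + y \in G) ->
  (forall x y, f (x + y) = f x + f y) ->
  [set v in G | f v == 1%R] = set0 \/ (2 * #|[set v in G | f v == 1%R]| = #|G|)%N.
Proof.
move=> GD fD; set G1 := [set v in G | f v == 1%R].
have [->|[u uG1]] := set_0Vmem G1; [by left | right].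
move: (uG1); rewrite inE => /andP [uG fu].
rewrite -(cardsID G1 G) mul2n -addnn; congr (_ + _)%N.
  by apply: eq_card => v; rewrite !inE; case: (v \in G).
have -> : G :\: G1 = [set v + u | v in G1].
  apply/setP => w; rewrite !inE; apply/idP/imsetP.
    move=> /andP [w1 wG]; exists (w + u); last by rewrite -addrA mx_addxx addr0.
    rewrite inE GD //= fD (eqP fu); move: w1; rewrite wG /=.
    by case: (F2_case (f w)) => ->; rewrite ?eqxx // add0r.
  move=> [v]; rewrite inE => /andP [vG fv] ->.
  by rewrite GD // fD (eqP fv) (eqP fu) F2_addxx.
by rewrite card_imset //; apply: addIr.
Qed.

Lemma nz_row m n (M : 'M['F_2]_(m, n)) : M != 0 -> exists i, row i M != 0.
Proof.
move=> H; case: (pickP (fun i => row i M != 0)) => [i Hi|N]; first by exists i.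
exfalso; move/eqP: H; apply; apply/matrixP => i j.
by have := N i; rewrite /= => /negbFE /eqP /rowP /(_ j); rewrite !mxE.
Qed.

Lemma part_dims n (P : {set {set vec n}}) A B :
  vs_partition P -> A \in P -> B \in P -> A != B -> (sdim A + sdim B <= n)%N.
Proof.
move=> HP AP BP AB; rewrite leqNgt; apply/negP => Hlt.
have [sA _] := HP.1 A AP; have [sB _] := HP.1 B BP.
have := mxrank_sum_cap (Defs.span A) (Defs.span B).
have := rank_leq_col (Defs.span A + Defs.span B)%MS.
rewrite /sdim in Hlt => Hle Heq.
have : (Defs.span A :&: Defs.span B)%MS != 0.
  by rewrite -mxrank_eq0; apply/eqP => H0; move: Heq; rewrite H0; lia.
move=> /nz_row [i Hi].
set v := row i _ in Hi.
have vA : v \in A by rewrite (subspace_sub _ sA); apply: submx_trans (row_sub _ _) (capmxSl _ _).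
have vB : v \in B by rewrite (subspace_sub _ sB); apply: submx_trans (row_sub _ _) (capmxSr _ _).
have [C [_ U]] := HP.2 v Hi.
by move: AB; rewrite -(U A) ?(U B) ?eqxx.
Qed.

Lemma sum_bool_card (T : finType) (D : {pred T}) (p : pred T) :
  (\sum_(x in D) (p x : nat))%N = #|[set x in D | p x]|.
Proof.
rewrite -big_mkcondr /= sum1_card; apply: eq_card => x; by rewrite !inE.
Qed.

Lemma ndim0 n (P : {set {set vec n}}) d : (forall A, A \in P -> sdim A != d) -> ndim P d = 0%N.
Proof.
move=> H; apply/eqP; rewrite cards_eq0; apply/eqP/setP => A; rewrite !inE.
by apply/negP => /andP [AP /eqP E]; move: (H A AP); rewrite E eqxx.
Qed.

Lemma group_dims n (P : {set {set vec n}}) (g : nat -> nat) :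
  (\sum_(A in P) g (sdim A))%N = (\sum_(d < n.+1) ndim P d * g d)%N.
Proof.
have E : forall A : {set vec n}, g (sdim A) = (\sum_(d < n.+1 | sdim A == d) g d)%N.
  move=> A; rewrite (big_pred1 (inord (sdim A))) ?inordK ?ltnS ?sdim_le //.
  move=> d /=; apply/eqP/eqP => [E|->]; first by apply/val_inj; rewrite /= -E inordK // ltnS sdim_le.
  by rewrite inordK // ltnS sdim_le.
under eq_bigr do rewrite E.
rewrite (exchange_big_dep xpredT) //=; apply: eq_bigr => d _.
rewrite sum_nat_const /ndim; congr (_ * _)%N.
by apply: eq_card => A; rewrite !inE.
Qed.

Lemma sum_bool_cardT (T : finType) (p : pred T) :
  (\sum_(x : T) (p x : nat))%N = #|[set x | p x]|.
Proof. rewrite -big_mkcondr /= sum1_card; apply: eq_card => x; by rewrite !inE. Qed.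

Definition dotw n (w v : vec n) : 'F_2 := (v *m w^T) 0 0.

Lemma dotwDv n (w x y : vec n) : dotw w (x + y) = dotw w x + dotw w y.
Proof. by rewrite /dotw mulmxDl mxE. Qed.

Lemma dotwDw n (x y v : vec n) : dotw (x + y) v = dotw x v + dotw y v.
Proof.
rewrite /dotw !mxE -big_split /=; apply: eq_bigr => k _; by rewrite !mxE mulrDr.
Qed.

Lemma dotw_delta n (j : 'I_n) (v : vec n) : dotw (delta_mx 0 j) v = v 0 j.
Proof.
rewrite /dotw !mxE (bigD1 j) //= !mxE !eqxx mulr1 big1 ?addr0 // => k kj.
by rewrite !mxE (negbTE kj) /= mulr0.
Qed.

Lemma dotw_v0 n (w : vec n) : dotw w 0 = 0.
Proof. by rewrite /dotw mul0mx mxE. Qed.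

Lemma card_dot1 n (v : vec n) : v != 0 -> (2 * #|[set w : vec n | dotw w v == 1%R]| = 2 ^ n)%N.
Proof.
move=> vn0.
have := @half_lemma n [set: vec n] (fun w => dotw w v) (fun x y _ _ => in_setT (x + y)) (fun x y => dotwDw x y v).
have -> : [set w in [set: vec n] | dotw w v == 1%R] = [set w : vec n | dotw w v == 1%R].
  by apply/setP => w; rewrite !inE.
rewrite card_vec; case=> // H.
have [j Hj] : exists j, v 0 j != 0.
  case: (pickP (fun j => v 0 j != 0)) => [j Hj|N]; first by exists j.
  by exfalso; move/eqP: vn0; apply; apply/rowP => j; have := N j; rewrite /= mxE => /negbFE /eqP.
have : delta_mx 0 j \in [set w : vec n | dotw w v == 1%R].
  by rewrite inE dotw_delta; case: (F2_case (v 0 j)) Hj => ->.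
by rewrite H inE.
Qed.

Definition Xw n (w : vec n) := [set v : vec n | dotw w v == 1%R].

Lemma sub_half n (A : {set vec n}) w : is_subspace A ->
  A :&: Xw w = set0 \/ (2 * #|A :&: Xw w| = #|A|)%N.
Proof.
move=> sA.
have := @half_lemma n A (dotw w) (fun x y => subspaceD sA) (dotwDv w).
have -> : [set v in A | dotw w v == 1%R] = A :&: Xw w by apply/setP => v; rewrite !inE.
by [].
Qed.

Lemma Xw_nz n (w v : vec n) : v \in Xw w -> v != 0.
Proof. by rewrite inE; apply: contraL => /eqP ->; rewrite dotw_v0. Qed.

Lemma plane_count n (A : {set vec n}) : is_subspace A -> sdim A = 2%N ->
  (2 * #|[set w : vec n | A :&: Xw w != set0]| = 3 * 2 ^ n.-1)%N.
Proof.
move=> sA dA.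
have E1 : (\sum_(w : vec n) #|A :&: Xw w|)%N = (2 * #|[set w : vec n | A :&: Xw w != set0]|)%N.
  rewrite -sum_bool_cardT big_distrr /=; apply: eq_bigr => w _.
  case: (sub_half w sA) => [->|H]; first by rewrite cards0 eqxx.
  have -> : (A :&: Xw w != set0) by apply/eqP => H0; move: H; rewrite H0 cards0 card_subspace // dA.
  move: H; rewrite (card_subspace sA) dA (_ : (2 ^ 2 = 2 * 2)%N) // => /eqP.
  by rewrite eqn_mul2l /= => /eqP ->.
rewrite -E1.
have E2 : forall w : vec n, #|A :&: Xw w| = (\sum_(v in A) (dotw w v == 1%R : nat))%N.
  by move=> w; rewrite sum_bool_card; apply: eq_card => v; rewrite !inE.
under eq_bigr do rewrite E2.
rewrite exchange_big /=.
rewrite (bigD1 0) ?subspace0 //= big1 ?add0n; last first.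
  by move=> w _; rewrite dotw_v0.
have E3 : forall v, v \in A -> v != 0 -> (\sum_(w : vec n) (dotw w v == 1%R : nat))%N = (2 ^ n.-1)%N.
  move=> v _ vn0; rewrite sum_bool_cardT; have := card_dot1 vn0.
  case: n {A sA dA E1 E2} v vn0 => [|n] v vn0.
    by exfalso; move/eqP: vn0; apply; apply/rowP => -[].
  by rewrite expnS /= => /eqP; rewrite eqn_mul2l /= => /eqP.
rewrite (eq_bigr (fun _ => 2 ^ n.-1)%N); last by move=> v /andP [vn0 vA]; apply: E3.
rewrite sum_nat_const; congr (_ * _)%N.
have := cardsD1 0 A; rewrite subspace0 // (card_subspace sA) dA => /eqP.
rewrite (_ : (2 ^ 2 = 1 + 3)%N) // eqn_add2l => /eqP ->.
by apply: eq_card => v; rewrite !inE andbC.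
Qed.

Definition Ldims : seq nat := [:: 2; 4; 6; 8; 10]%N.

Lemma has_type_gen n (P : {set {set vec n}}) t :
  (forall d, d \notin Ldims -> ndim P d = 0%N) ->
  all (fun p => p.1 \in Ldims) t ->
  (forall d, d \in Ldims -> ndim P d = \sum_(p <- t | p.1 == d) p.2)%N ->
  has_type P t.
Proof.
move=> H0 Ht H d; case: (boolP (d \in Ldims)) => [/H //| Hd]; rewrite H0 //.
rewrite big1_seq // => p /andP [/eqP pd pt]; exfalso.
by move: (allP Ht p pt); rewrite pd (negbTE Hd).
Qed.

Lemma even_dims s : (0 < s)%N -> (s <= 10)%N -> ~~ odd s -> s \in Ldims.
Proof. by do 11?[case: s => [|s] //]. Qed.

Section Hyp.
Variable P : {set {set vec 10}}.
Hypothesis HP : vs_partition P.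
Hypothesis H24 : forall A, A \in P -> (sdim A == 2%N) || (sdim A == 4%N).

Definition Yw (w : vec 10) := [set A in P | (sdim A == 2%N) && (A :&: Xw w != set0)].

Lemma Yw_div w : (4 %| #|Yw w|)%N.
Proof.
have HX := part_count HP (@Xw_nz 10 w).
have H8X : (8 %| #|Xw w|)%N.
  have := @half_lemma 10 [set: vec 10] (dotw w) (fun x y _ _ => in_setT (x + y)) (dotwDv w).
  have -> : [set v in [set: vec 10] | dotw w v == 1%R] = Xw w by apply/setP => v; rewrite !inE.
  case=> [->|H]; rewrite ?cards0 //; move: H; rewrite card_vec (_ : (2 ^ 10 = 1024)%N) // => H.
  by have -> : #|Xw w| = 512%N by apply/eqP; rewrite -(eqn_pmul2l (_ : 0 < 2)%N) // H.
move: H8X; rewrite -HX (bigID (fun A => sdim A == 2%N)) /=.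
have -> : (\sum_(A in P | sdim A == 2%N) #|A :&: Xw w|)%N = (2 * #|Yw w|)%N.
  rewrite /Yw -sum_bool_card big_distrr /= big_mkcondr /=; apply: eq_bigr => A AP.
  case: ifP => // /eqP dA; have [sA _] := HP.1 A AP.
  case: (sub_half w sA) => [->|H]; first by rewrite cards0 eqxx.
  have -> : (A :&: Xw w != set0) by apply/eqP => H0; move: H; rewrite H0 cards0 card_subspace // dA.
  move: H; rewrite (card_subspace sA) dA (_ : (2 ^ 2 = 2 * 2)%N) // => /eqP.
  by rewrite eqn_mul2l /= => /eqP ->.
have H8 : (8 %| \sum_(A in P | ~~ (sdim A == 2%N)) #|A :&: Xw w|)%N.
  apply: dvdn_sum => A /andP [AP dA]; have [sA _] := HP.1 A AP.
  have /eqP d4 : sdim A == 4%N by move: (H24 AP); rewrite (negbTE dA).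
  case: (sub_half w sA) => [->|H]; first by rewrite cards0.
  move: H; rewrite (card_subspace sA) d4 (_ : (2 ^ 4 = 2 * 8)%N) // => /eqP.
  by rewrite eqn_mul2l /= => /eqP ->.
rewrite dvdn_addl // -(@dvdn_pmul2l 2 4) // => H; exact: H.
Qed.

Lemma Yw_sum : (\sum_(w : vec 10) #|Yw w|)%N = (ndim P 2 * 768)%N.
Proof.
have E : forall w, #|Yw w| = (\sum_(A in P | sdim A == 2%N) (A :&: Xw w != set0 : nat))%N.
  move=> w; rewrite -big_mkcondr /= sum1_card /Yw; apply: eq_card => A; by rewrite !inE andbA.
under eq_bigr do rewrite E.
rewrite exchange_big /=.
rewrite (eq_bigr (fun _ => 768%N)).
  rewrite sum_nat_const /ndim; congr (_ * _)%N; apply: eq_card => A; by rewrite !inE.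
move=> A /andP [AP /eqP dA]; have [sA _] := HP.1 A AP.
have := plane_count sA dA; rewrite sum_bool_cardT (_ : (3 * 2 ^ 10.-1 = 2 * 768)%N) // => /eqP.
by rewrite eqn_mul2l /= => /eqP.
Qed.

Lemma hyper_16 : ndim P 2 != 1%N /\ ndim P 2 != 6%N.
Proof.
have Hle : forall w, (#|Yw w| <= ndim P 2)%N.
  move=> w; apply: subset_leq_card; apply/subsetP => A; rewrite !inE.
  by case/andP => -> /andP [-> _].
have S := Yw_sum.
split; apply/eqP => Ha.
  have : (\sum_(w : vec 10) #|Yw w| <= \sum_(w : vec 10) 0)%N.
    apply: leq_sum => w _; have := Hle w; have := Yw_div w; rewrite Ha.
    by case: #|Yw w| => [|[|k]].
  by rewrite S Ha big1.
have : (\sum_(w : vec 10) #|Yw w| <= \sum_(w : vec 10) 4)%N.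
  apply: leq_sum => w _; have := Hle w; have := Yw_div w; rewrite Ha.
  by case: #|Yw w| => [|[|[|[|[|[|[|k]]]]]]].
rewrite S Ha sum_nat_const (eq_card (B := [set: vec 10])) ?card_vec // => v; rewrite inE; exact: erefl.
Qed.
End Hyp.

Lemma has_type5 n (P : {set {set vec n}}) t :
  (forall d, d \notin Ldims -> ndim P d = 0%N) ->
  all (fun p => p.1 \in Ldims) t ->
  (ndim P 2 = \sum_(p <- t | p.1 == 2) p.2)%N ->
  (ndim P 4 = \sum_(p <- t | p.1 == 4) p.2)%N ->
  (ndim P 6 = \sum_(p <- t | p.1 == 6) p.2)%N ->
  (ndim P 8 = \sum_(p <- t | p.1 == 8) p.2)%N ->
  (ndim P 10 = \sum_(p <- t | p.1 == 10) p.2)%N ->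
  has_type P t.
Proof.
move=> H0 Ht H2 H4 H6 H8 H10; apply: has_type_gen => // d.
by rewrite /Ldims !inE; do ?case/orP; move/eqP->.
Qed.

Lemma ndim_gt0 n (P : {set {set vec n}}) A : A \in P -> (0 < ndim P (sdim A))%N.
Proof. by move=> AP; apply/card_gt0P; exists A; rewrite !inE AP eqxx. Qed.

Lemma excl1 n (P : {set {set vec n}}) d e : vs_partition P -> (n < d + e)%N -> d != e ->
  (0 < ndim P d)%N -> ndim P e = 0%N.
Proof.
move=> HP Hde dne /card_gt0P [A]; rewrite inE => /andP [AP /eqP dA].
apply: ndim0 => B BP; apply/eqP => dB.
have AB : A != B by apply/eqP => E; move: dne; rewrite -dA -dB E eqxx.
by have := part_dims HP AP BP AB; rewrite dA dB leqNgt Hde.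
Qed.

Lemma excl2 n (P : {set {set vec n}}) d : vs_partition P -> (n < d + d)%N -> (ndim P d <= 1)%N.
Proof.
move=> HP Hd; rewrite leqNgt; apply/card_gt1P => -[A [B [AP BP AB]]].
move: AP BP; rewrite !inE => /andP [AP /eqP dA] /andP [BP /eqP dB].
by have := part_dims HP AP BP AB; rewrite dA dB leqNgt Hd.
Qed.

Theorem classify (P : {set {set vec 10}}) :
     vs_partition P ->
     (forall A, A \in P -> ~~ odd (sdim A)) ->
     [\/ has_type P [:: (10, 1)],
         has_type P [:: (2, 256); (8, 1)],
         exists2 i, (i <= 64)%N & has_type P [:: (2, 320 - 5 * i); (4, i); (6, 1)]
       | exists2 i, (i <= 66)%N & has_type P [:: (2, 341 - 5 * i); (4, i)]]%N.
Proof.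
move=> HP Hev.
have Hd : forall A, A \in P -> sdim A \in Ldims.
  by move=> A AP; apply: even_dims; [exact: (HP.1 A AP).2 | exact: sdim_le | exact: Hev].
have H0 : forall d, d \notin Ldims -> ndim P d = 0%N.
  move=> d dn; apply: ndim0 => A AP; apply/eqP => E; move: (Hd A AP); rewrite E.
  by rewrite (negbTE dn).
have T := part_total HP; rewrite (group_dims P (fun d => 2 ^ d - 1)%N) in T.
rewrite -(big_mkord xpredT (fun d => ndim P d * (2 ^ d - 1))%N) /index_iota /= in T.
rewrite !big_cons big_nil /= in T.
rewrite !(H0 0%N) // !(H0 1%N) // !(H0 3%N) // !(H0 5%N) // !(H0 7%N) // !(H0 9%N) // in T.
have E8 := excl2 (d := 8) HP isT; have E6 := excl2 (d := 6) HP isT.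
have X84 : (0 < ndim P 8)%N -> ndim P 4 = 0%N by apply: excl1.
have X86 : (0 < ndim P 8)%N -> ndim P 6 = 0%N by apply: excl1.
have Hh : ndim P 6 = 0%N -> ndim P 8 = 0%N -> ndim P 10 = 0%N ->
          ndim P 2 != 1%N /\ ndim P 2 != 6%N.
  move=> Z6 Z8 Z10; apply: hyper_16 => // A AP; have := Hd A AP.
  rewrite /Ldims !inE => /orP [/eqP->//|/orP [/eqP->//|/orP [/eqP E|/orP [/eqP E|/eqP E]]]];
  by move: (ndim_gt0 AP); rewrite E ?Z6 ?Z8 ?Z10.
have T' : (3 * ndim P 2 + 15 * ndim P 4 + 63 * ndim P 6 + 255 * ndim P 8 + 1023 * ndim P 10 = 1023)%N.
  by move: T; rewrite /= !mul0n; lia.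
case: (boolP (ndim P 10 == 0%N)) => /eqP Z10; last first.
  by apply: Or41; apply: has_type5 => //; rewrite !big_cons big_nil /=; lia.
case: (boolP (ndim P 8 == 0%N)) => /eqP Z8; last first.
  have Z84 : ndim P 4 = 0%N by apply: X84; lia.
  have Z86 : ndim P 6 = 0%N by apply: X86; lia.
  by apply: Or42; apply: has_type5 => //; rewrite !big_cons big_nil /=; lia.
case: (boolP (ndim P 6 == 0%N)) => /eqP Z6; last first.
  apply: Or43; exists (ndim P 4); first lia.
  by apply: has_type5 => //; rewrite !big_cons big_nil /=; lia.
have [/eqP h1 /eqP h6] := Hh Z6 Z8 Z10.
apply: Or44; exists (ndim P 4); first lia.
by apply: has_type5 => //; rewrite !big_cons big_nil /=; lia.
Qed.

Lemma addKF2 m n (x y : 'M['F_2]_(m, n)) : x + (x + y) = y.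
Proof. by rewrite addrA mx_addxx add0r. Qed.

Section JCons.
Variable n : nat.
Variable Jm : 'M['F_2]_n.
Hypothesis HJ : Jm *m Jm = Jm + 1%:M.

Definition Jf (v : vec n) := v *m Jm.

Lemma JJ v : Jf (Jf v) = Jf v + v.
Proof. by rewrite /Jf -mulmxA HJ mulmxDr mulmx1. Qed.

Lemma JD x y : Jf (x + y) = Jf x + Jf y.
Proof. by rewrite /Jf mulmxDl. Qed.

Lemma J0 : Jf 0 = 0.
Proof. by rewrite /Jf mul0mx. Qed.

Definition Lne (v : vec n) : {set vec n} := [set x in [:: 0; v; Jf v; v + Jf v]].

Lemma Jv_neq v : v != 0 -> (Jf v != v) /\ (Jf v != 0).
Proof.
move=> vn0; split; apply/eqP => E; move/eqP: vn0; apply.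
  by have := JJ v; rewrite E E mx_addxx.
by have := JJ v; rewrite E J0 add0r.
Qed.

Lemma Lne_card v : v != 0 -> #|Lne v| = 4%N.
Proof.
move=> vn0; have [h1 h2] := Jv_neq vn0.
have h3 : v + Jf v != 0 by apply: contra h1 => /eqP E; apply/eqP; rewrite -[Jf v](addKF2 v) E addr0.
have h4 : v + Jf v != v by apply: contra h2 => /eqP E; apply/eqP; rewrite -[Jf v](addKF2 v) E mx_addxx.
have h5 : v + Jf v != Jf v by apply: contra vn0 => /eqP E; apply/eqP; rewrite -[v]addr0 -(mx_addxx (Jf v)) addrA E mx_addxx.
rewrite /Lne cardsE; apply/card_uniqP; rewrite /= !inE !negb_or.
by rewrite ![0 == _]eq_sym vn0 h2 h3 [v == _]eq_sym h1 [v == _]eq_sym h4 [Jf v == _]eq_sym h5.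
Qed.

Lemma Lne_closed v x y : x \in Lne v -> y \in Lne v -> x + y \in Lne v.
Proof.
rewrite !inE => /or4P [] /eqP -> /or4P [] /eqP ->;
  rewrite ?addr0 ?add0r ?mx_addxx ?addKF2 ?eqxx ?orbT //.
all: first [ by rewrite addrC eqxx !orbT | by rewrite [v + Jf v]addrC addKF2 eqxx !orbT
           | by rewrite addrC addKF2 eqxx !orbT | by rewrite -addrA mx_addxx addr0 eqxx !orbT ].
Qed.


Lemma Lne_J v x : x \in Lne v -> Jf x \in Lne v.
Proof.
rewrite !inE => /or4P [] /eqP ->; rewrite ?J0 ?eqxx ?orbT //.
- by rewrite JJ addrC eqxx ?orbT.
- by rewrite JD JJ addKF2 eqxx ?orbT.
Qed.

Lemma Lne_in v : v \in Lne v.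
Proof. by rewrite !inE eqxx ?orbT. Qed.

Lemma Lne0 v : 0 \in Lne v.
Proof. by rewrite !inE eqxx. Qed.

Lemma Lne_sub (W : {set vec n}) v : 0 \in W -> (forall x y, x \in W -> y \in W -> x + y \in W) ->
  (forall x, x \in W -> Jf x \in W) -> v \in W -> Lne v \subset W.
Proof.
move=> W0 WD WJ vW; apply/subsetP => x; rewrite !inE => /or4P [] /eqP -> //.
  by apply: WJ.
by apply: WD => //; apply: WJ.
Qed.

Lemma Lne_eq v u : v != 0 -> u != 0 -> u \in Lne v -> Lne u = Lne v.
Proof.
move=> vn0 un0 uL; apply/eqP; rewrite eqEcard Lne_card // Lne_card // leqnn andbT.
apply: Lne_sub => //; [exact: Lne0 | exact: Lne_closed | exact: Lne_J].
Qed.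

Lemma Lne_subspace v : v != 0 -> is_subspace (Lne v) /\ sdim (Lne v) = 2%N.
Proof.
move=> vn0; have S : is_subspace (Lne v) by apply: subgroup_subspace; [exact: Lne0 | exact: Lne_closed].
by split => //; apply: sdim_card => //; rewrite Lne_card.
Qed.

Variable Wf : {set {set vec n}}.
Hypothesis HW0 : forall W, W \in Wf -> 0 \in W.
Hypothesis HWD : forall W x y, W \in Wf -> x \in W -> y \in W -> x + y \in W.
Hypothesis HWJ : forall W x, W \in Wf -> x \in W -> Jf x \in W.
Hypothesis HWnz : forall W, W \in Wf -> exists2 x, x \in W & x != 0.
Hypothesis HWdisj : forall W W' x, W \in Wf -> W' \in Wf -> W != W' -> x \in W -> x \in W' -> x = 0.

Definition cov := \bigcup_(W in Wf) W.
Definition Lines := [set Lne v | v in [set v | (v != 0) && (v \notin cov)]].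
Definition Pc := Wf :|: Lines.

Lemma Lines_dim A : A \in Lines -> is_subspace A /\ sdim A = 2%N.
Proof. by case/imsetP => v; rewrite inE => /andP [vn0 _] ->; apply: Lne_subspace. Qed.

Lemma Wf_subspace W : W \in Wf -> is_subspace W.
Proof. by move=> WW; apply: subgroup_subspace; [exact: HW0 | move=> x y; exact: HWD]. Qed.

Lemma Pc_partition : vs_partition Pc.
Proof.
split.
  move=> A; rewrite inE => /orP [AW|AL]; last by have [S ->] := Lines_dim AL.
  have S := Wf_subspace AW; split => //.
  have [x xW xn0] := HWnz AW.
  rewrite lt0n; apply/eqP => d0; have := card_subspace S; rewrite d0 expn0 => /eqP.
  rewrite (cardsD1 0) HW0 // eqSS cards_eq0 => /eqP E.
  have H : x \in A :\ 0 by rewrite !inE xn0 xW.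
  by rewrite E inE in H. 
move=> v vn0.
case: (boolP (v \in cov)) => vc.
  have [W WW vW] : exists2 W, W \in Wf & v \in W by move/bigcupP: vc => [W ? ?]; exists W.
  exists W; split; first by rewrite inE WW.
  move=> B []; rewrite inE => /orP [BW vB|BL vB].
    by apply/eqP; apply: contraT => WB; rewrite -(negbTE vn0) (HWdisj WW BW WB vW vB) eqxx.
  exfalso; case/imsetP: BL => u; rewrite inE => /andP [un0 uc] Be.
  rewrite Be in vB; have E := Lne_eq un0 vn0 vB.
  have : u \in Lne v by rewrite E Lne_in.
  move/(subsetP (Lne_sub (HW0 WW) (fun x y => HWD WW) (fun x => HWJ WW) vW)) => uW.
  by move/negP: uc; apply; apply/bigcupP; exists W.
exists (Lne v); split.
  by split; [rewrite inE; apply/orP; right; apply/imsetP; exists v; rewrite // inE vn0 vc | exact: Lne_in].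
move=> B []; rewrite inE => /orP [BW vB|BL vB].
  by move/negP: vc; case; apply/bigcupP; exists B.
case/imsetP: BL => u; rewrite inE => /andP [un0 uc] Be; rewrite Be in vB *.
exact: Lne_eq un0 vn0 vB.
Qed.

Lemma Pc_dims d : d != 2%N -> ndim Pc d = #|[set W in Wf | sdim W == d]|.
Proof.
move=> d2; apply: eq_card => A; rewrite !inE.
case: (boolP (A \in Lines)) => AL; last by rewrite orbF.
by rewrite (Lines_dim AL).2 eq_sym (negbTE d2) !andbF.
Qed.

Lemma Pc_mem A : A \in Pc -> A \in Wf \/ sdim A = 2%N.
Proof. by rewrite inE => /orP [->|/Lines_dim [_ ->]]; [left|right]. Qed.
End JCons.

Definition JLf (m : nat) : seq (seq bool) :=
  mkseq (fun i => mkseq (fun j => if odd i then (j == i.-1) || (j == i) else j == i.+1) m) m.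
Definition Eye m n off : seq (seq bool) := mkseq (fun i => mkseq (fun j => j == i + off) n) m.
Definition EyeT m n off : seq (seq bool) := mkseq (fun i => mkseq (fun j => i == j + off) n) m.
Definition Yl (k : nat) : seq (seq bool) :=
  match k with
  | 0 => [:: [:: true; false; false; false; false; false; false; false; false; false]; [:: false; true; false; false; false; false; false; false; false; false]; [:: false; false; true; false; false; false; false; false; false; false]; [:: false; false; false; true; false; false; false; false; false; false]]
  | 1 => [:: [:: false; true; false; false; false; false; false; false; false; false]; [:: true; true; false; false; false; false; false; false; false; false]; [:: false; false; false; true; false; false; false; false; false; false]; [:: false; false; true; true; false; false; false; false; false; false]]
  | 2 => [:: [:: false; false; true; false; false; false; false; false; false; false]; [:: false; false; false; true; false; false; false; false; false; false]; [:: false; false; false; false; true; false; false; false; false; false]; [:: false; false; false; false; false; true; false; false; false; false]]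
  | 3 => [:: [:: false; false; false; true; false; false; false; false; false; false]; [:: false; false; true; true; false; false; false; false; false; false]; [:: false; false; false; false; false; true; false; false; false; false]; [:: false; false; false; false; true; true; false; false; false; false]]
  | 4 => [:: [:: false; false; false; false; true; false; false; false; false; false]; [:: false; false; false; false; false; true; false; false; false; false]; [:: true; false; false; false; true; false; false; false; false; false]; [:: false; true; false; false; false; true; false; false; false; false]]
  | 5 => [:: [:: false; false; false; false; false; true; false; false; false; false]; [:: false; false; false; false; true; true; false; false; false; false]; [:: false; true; false; false; false; true; false; false; false; false]; [:: true; true; false; false; true; true; false; false; false; false]]
  | _ => [::]
  end.

Ltac mxcheck := rewrite ?tomx_mul ?tomx_add -?tomx1 ?tomx_mul ?tomx_add;
  apply: (congr1 (tomx _ _)); vm_compute; reflexivity.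

Definition Jm := tomx 10 10 (JLf 10).
Lemma HJ : Jm *m Jm = Jm + 1%:M.
Proof. rewrite /Jm. mxcheck. Qed.

Definition Yk (k : nat) : 'M['F_2]_(4, 10) := tomx 4 10 (Yl k).
Definition Xc (c : 'rV['F_2]_6) : 'M['F_2]_(4, 10) := \sum_(k < 6) c 0 k *: Yk k.

Definition xl (cb : seq bool) : seq (seq bool) :=
  mkseq (fun i => mkseq (fun j => oddsum 6 (fun k => nth false cb k && nth false (nth [::] (Yl k) i) j)) 10) 4.

Lemma XcE c : Xc c = tomx 4 10 (xl (bits c)).
Proof.
apply/matrixP => i j; rewrite summxE !mxE !nth_mkseq // -sumF2.
apply: eq_bigr => k _; rewrite !mxE rowF2E F2_mulb //.
Qed.

Definition nzd_check : bool :=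
  all (fun cb => all (fun xb =>
    (all (fun j => ~~ oddsum 4 (fun i => nth false xb i && nth false (nth [::] (xl cb) i) j)) (iota 0 10))
      ==> (all negb cb || all negb xb)) (allbits 4)) (allbits 6).

Lemma nzd_check_ok : nzd_check.
Proof. vm_compute. reflexivity. Qed.

Lemma nzd c (x : 'rV['F_2]_4) : x *m Xc c = 0 -> c = 0 \/ x = 0.
Proof.
rewrite XcE => H.
have Hj : all (fun j => ~~ oddsum 4 (fun i => nth false (bits x) i && nth false (nth [::] (xl (bits c)) i) j)) (iota 0 10).
  apply/allP => j; rewrite mem_iota add0n => /andP [_ jl].
  have := congr1 (fun M : 'rV['F_2]_10 => M 0 (Ordinal jl)) H; rewrite vec_mulE mxE /=.
  by move/(@F2_nat_inj _ false) => ->.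
have cb : bits c \in allbits 6 by have := allbitsP (bits c); rewrite size_bits.
have xb : bits x \in allbits 4 by have := allbitsP (bits x); rewrite size_bits.
have := allP (allP nzd_check_ok _ cb) _ xb; move=> /implyP /(_ Hj).
by case/orP => /bits0 ->; [left|right].
Qed.

Definition Img k (M : 'M['F_2]_(k, 10)) : {set vec 10} := [set x *m M | x in [set: 'rV_k]].

Definition goodk k (W : {set vec 10}) :=
  exists (M : 'M['F_2]_(k, 10)) (N : 'M['F_2]_(10, k)) (K : 'M['F_2]_k),
    [/\ M *m N = 1%:M, M *m Jm = K *m M & W = Img M].

Section Good.
Variables (k : nat) (W : {set vec 10}).
Hypothesis Hk : (0 < k)%N.
Hypothesis HW : goodk k W.

Lemma good0 : 0 \in W.
Proof. by case: HW => M [N [K [_ _ ->]]]; apply/imsetP; exists 0; rewrite ?mul0mx ?inE. Qed.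

Lemma goodD x y : x \in W -> y \in W -> x + y \in W.
Proof.
case: HW => M [N [K [_ _ ->]]] /imsetP [a _ ->] /imsetP [b _ ->].
by apply/imsetP; exists (a + b); rewrite ?inE ?mulmxDl.
Qed.

Lemma goodJ x : x \in W -> Jf Jm x \in W.
Proof.
case: HW => M [N [K [_ HK ->]]] /imsetP [a _ ->].
by apply/imsetP; exists (a *m K); rewrite ?inE // /Jf -!mulmxA HK.
Qed.

Lemma good_card : #|W| = (2 ^ k)%N.
Proof.
case: HW => M [N [K [HN _ ->]]]; rewrite card_imset ?card_vec //.
by move=> a b E; rewrite -[a]mulmx1 -[b]mulmx1 -HN !mulmxA E.
Qed.

Lemma good_subspace : is_subspace W.
Proof. by apply: subgroup_subspace; [exact: good0 | exact: goodD]. Qed.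

Lemma good_sdim : sdim W = k.
Proof. by apply: sdim_card; [exact: good_subspace | exact: good_card]. Qed.

Lemma good_nz : exists2 x, x \in W & x != 0.
Proof.
have : (1 < #|W|)%N.
  by rewrite good_card; have := ltn_exp2l 0 k (isT : (1 < 2)%N); rewrite expn0 Hk => ->.
case/card_gt1P => x [y [xW yW xy]].
case: (boolP (x == 0)) => [/eqP x0|xn0]; last by exists x.
by exists y => //; rewrite -x0 eq_sym.
Qed.
End Good.

Definition Zl m n : seq (seq bool) := mkseq (fun _ => nseq n false) m.
Lemma tomxZ m n : tomx m n (Zl m n) = 0.
Proof. by apply/matrixP => i j; rewrite !mxE nth_mkseq // nth_nseq if_same. Qed.

Definition J4 := tomx 4 4 (JLf 4).
Definition Pi := tomx 10 4 (EyeT 10 4 6).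
Definition If := tomx 4 10 (Eye 4 10 6).

Lemma If_Pi : If *m Pi = 1%:M. Proof. rewrite /If /Pi. mxcheck. Qed.
Lemma If_J : If *m Jm = J4 *m If. Proof. rewrite /If /Jm /J4. mxcheck. Qed.
Lemma Yk_Pi (k : 'I_6) : Yk k *m Pi = 0.
Proof. rewrite /Pi /Yk -(tomxZ 4 4); case: k => [[|[|[|[|[|[|k]]]]]] Hk] //; mxcheck. Qed.
Lemma Yk_J (k : 'I_6) : Yk k *m Jm = J4 *m Yk k.
Proof. rewrite /Jm /J4 /Yk; case: k => [[|[|[|[|[|[|k]]]]]] Hk] //; mxcheck. Qed.

Definition Mc c := Xc c + If.

Lemma Xc_Pi c : Xc c *m Pi = 0.
Proof. by rewrite /Xc mulmx_suml big1 // => k _; rewrite -scalemxAl Yk_Pi scaler0. Qed.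

Lemma Mc_Pi c : Mc c *m Pi = 1%:M.
Proof. by rewrite /Mc mulmxDl Xc_Pi add0r If_Pi. Qed.

Lemma Xc_J c : Xc c *m Jm = J4 *m Xc c.
Proof.
rewrite /Xc mulmx_suml mulmx_sumr; apply: eq_bigr => k _.
by rewrite -scalemxAl Yk_J scalemxAr.
Qed.

Lemma Mc_J c : Mc c *m Jm = J4 *m Mc c.
Proof. by rewrite /Mc mulmxDl mulmxDr Xc_J If_J. Qed.

Lemma Xc_sub c c' : Xc c - Xc c' = Xc (c - c').
Proof. by rewrite /Xc -sumrB; apply: eq_bigr => k _; rewrite !mxE scalerBl. Qed.

Definition Uc c := Img (Mc c).

Lemma Uc_good c : goodk 4 (Uc c).
Proof. by exists (Mc c), Pi, J4; split; [exact: Mc_Pi | exact: Mc_J |]. Qed.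

Lemma Uc_disj c c' v : c != c' -> v \in Uc c -> v \in Uc c' -> v = 0.
Proof.
move=> cc /imsetP [x _ ->] /imsetP [y _ E].
have xy : x = y.
  by have := congr1 (fun v => v *m Pi) E; rewrite /= -!mulmxA !Mc_Pi !mulmx1.
subst y.
have : x *m Xc (c - c') = 0.
  by rewrite -Xc_sub mulmxBr; apply/eqP; rewrite subr_eq0; apply/eqP; move: E; rewrite /Mc !mulmxDr => /addIr.
case/nzd => [/eqP|->]; last by rewrite mul0mx.
by rewrite subr_eq0 (negbTE cc).
Qed.

Lemma W_disj k (M : 'M['F_2]_(k, 10)) c v : M *m Pi = 0 -> v \in Img M -> v \in Uc c -> v = 0.
Proof.
move=> HM /imsetP [x _ ->] /imsetP [y _ E].
have : y = 0 by have := congr1 (fun v => v *m Pi) E; rewrite /= -!mulmxA Mc_Pi HM mulmx1 mulmx0.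
by move=> y0; rewrite E y0 mul0mx.
Qed.

Definition J6 := tomx 6 6 (JLf 6).
Definition J8 := tomx 8 8 (JLf 8).
Definition M4 := tomx 4 10 (Eye 4 10 0).
Definition M6 := tomx 6 10 (Eye 6 10 0).
Definition M8 := tomx 8 10 (Eye 8 10 0).
Definition M10 := tomx 10 10 (Eye 10 10 0).

Lemma M4_good : goodk 4 (Img M4).
Proof.
exists M4, (tomx 10 4 (EyeT 10 4 0)), J4; split => //; rewrite /M4 /J4 /Jm; mxcheck.
Qed.
Lemma M6_good : goodk 6 (Img M6).
Proof.
exists M6, (tomx 10 6 (EyeT 10 6 0)), J6; split => //; rewrite /M6 /J6 /Jm; mxcheck.
Qed.
Lemma M8_good : goodk 8 (Img M8).
Proof.
exists M8, (tomx 10 8 (EyeT 10 8 0)), J8; split => //; rewrite /M8 /J8 /Jm; mxcheck.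
Qed.
Lemma M10_good : goodk 10 (Img M10).
Proof.
exists M10, (tomx 10 10 (EyeT 10 10 0)), Jm; split => //; rewrite /M10 /Jm; mxcheck.
Qed.
Lemma M4_Pi : M4 *m Pi = 0.
Proof. rewrite /M4 /Pi -(tomxZ 4 4); mxcheck. Qed.
Lemma M6_Pi : M6 *m Pi = 0.
Proof. rewrite /M6 /Pi -(tomxZ 6 4); mxcheck. Qed.

Lemma count10 (P : {set {set vec 10}}) : vs_partition P -> (forall A, A \in P -> sdim A \in Ldims) ->
  (forall d, d \notin Ldims -> ndim P d = 0%N) /\
  (3 * ndim P 2 + 15 * ndim P 4 + 63 * ndim P 6 + 255 * ndim P 8 + 1023 * ndim P 10 = 1023)%N.
Proof.
move=> HP Hd.
have H0 : forall d, d \notin Ldims -> ndim P d = 0%N.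
  move=> d dn; apply: ndim0 => A AP; apply/eqP => E; move: (Hd A AP); rewrite E.
  by rewrite (negbTE dn).
split => //.
have T := part_total HP; rewrite (group_dims P (fun d => 2 ^ d - 1)%N) in T.
rewrite -(big_mkord xpredT (fun d => ndim P d * (2 ^ d - 1))%N) /index_iota /= in T.
rewrite !big_cons big_nil /= in T.
rewrite !(H0 0%N) // !(H0 1%N) // !(H0 3%N) // !(H0 5%N) // !(H0 7%N) // !(H0 9%N) // in T.
by move: T; rewrite /= !mul0n; lia.
Qed.

Section Build.
Variable Wf : {set {set vec 10}}.
Hypothesis Hgood : forall W, W \in Wf -> exists2 k, (k \in Ldims) && (k != 2%N) & goodk k W.
Hypothesis Hdisj : forall W W' x, W \in Wf -> W' \in Wf -> W != W' -> x \in W -> x \in W' -> x = 0.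

Let P := Pc Jm Wf.

Lemma build_part : vs_partition P.
Proof.
apply: Pc_partition; first exact: HJ.
- by move=> W /Hgood [k /andP [kL _] g]; apply: good0 g.
- by move=> W x y /Hgood [k /andP [kL _] g]; exact: (goodD g).
- by move=> W x /Hgood [k /andP [kL _] g]; exact: (goodJ g).
- move=> W /Hgood [k /andP [kL _] g].
  have Hk : (0 < k)%N by move: kL; rewrite /Ldims !inE; case: (k) => [|k'].
  exact: (good_nz Hk g).
- exact: Hdisj.
Qed.

Lemma build_dims A : A \in P -> sdim A \in Ldims.
Proof.
case/(Pc_mem HJ) => [/Hgood [k /andP [kL _] g]|->] //.
by rewrite (good_sdim g).
Qed.

Lemma build_ndim d : d != 2%N -> ndim P d = #|[set W in Wf | sdim W == d]|.
Proof. exact: (Pc_dims HJ). Qed.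
End Build.

Lemma card_same (Wf : {set {set vec 10}}) k0 d : (forall W, W \in Wf -> sdim W = k0) ->
  #|[set W in Wf | sdim W == d]| = if d == k0 then #|Wf| else 0%N.
Proof.
move=> H; case: ifP => [/eqP ->|dk].
  by apply: eq_card => W; rewrite !inE; case: (boolP (W \in Wf)) => // /H ->; rewrite eqxx.
apply/eqP; rewrite cards_eq0; apply/eqP/setP => W; rewrite !inE.
by case: (boolP (W \in Wf)) => //= /H ->; rewrite eq_sym dk.
Qed.

Definition S (i : nat) : {set 'rV['F_2]_6} := [set c in take i (enum [set: 'rV['F_2]_6])].

Lemma card_S i : (i <= 64)%N -> #|S i| = i.
Proof.
move=> hi; rewrite /S cardsE; have := take_uniq i (enum_uniq [set: 'rV['F_2]_6]).
move/card_uniqP => ->; rewrite size_take -cardE card_vec.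
by case: ifP => // /negbT; rewrite -leqNgt (_ : 2 ^ 6 = 64)%N // => h; lia.
Qed.

Lemma Uc_nz c : exists2 x, x \in Uc c & x != 0.
Proof. by apply: (good_nz (k := 4)) => //; apply: Uc_good. Qed.

Lemma Uc_inj : injective Uc.
Proof.
move=> c c' E; apply/eqP; apply: contraT => cc.
have [x xU xn0] := Uc_nz c.
have xU' : x \in Uc c' by rewrite -E.
by rewrite -(negbTE xn0) (Uc_disj cc xU xU') eqxx.
Qed.

Lemma Uc_sdim c : sdim (Uc c) = 4%N.
Proof. exact: good_sdim (Uc_good c). Qed.

Lemma build_exists (Wf : {set {set vec 10}}) (t : seq (nat * nat)) :
  (forall W, W \in Wf -> exists2 k, (k \in Ldims) && (k != 2%N) & goodk k W) ->
  (forall W W' x, W \in Wf -> W' \in Wf -> W != W' -> x \in W -> x \in W' -> x = 0) ->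
  all (fun p => p.1 \in Ldims) t ->
  (3 * (\sum_(p <- t | p.1 == 2) p.2) + 15 * #|[set W in Wf | sdim W == 4%N]|
     + 63 * #|[set W in Wf | sdim W == 6%N]| + 255 * #|[set W in Wf | sdim W == 8%N]|
     + 1023 * #|[set W in Wf | sdim W == 10%N]| = 1023)%N ->
  #|[set W in Wf | sdim W == 4%N]| = (\sum_(p <- t | p.1 == 4) p.2)%N ->
  #|[set W in Wf | sdim W == 6%N]| = (\sum_(p <- t | p.1 == 6) p.2)%N ->
  #|[set W in Wf | sdim W == 8%N]| = (\sum_(p <- t | p.1 == 8) p.2)%N ->
  #|[set W in Wf | sdim W == 10%N]| = (\sum_(p <- t | p.1 == 10) p.2)%N ->
  exists P : {set {set vec 10}}, vs_partition P /\ has_type P t.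
Proof.
move=> Hg Hd Ht E f4 f6 f8 f10.
have HP := build_part Hg Hd.
exists (Pc Jm Wf); split => //.
have [H0 T] := count10 HP (build_dims Hg).
have e4 := @build_ndim Wf _ (isT : 4%N != 2%N).
have e6 := @build_ndim Wf _ (isT : 6%N != 2%N).
have e8 := @build_ndim Wf _ (isT : 8%N != 2%N).
have e10 := @build_ndim Wf _ (isT : 10%N != 2%N).
rewrite e4 e6 e8 e10 in T.
apply: has_type5 => //; rewrite ?e4 ?e6 ?e8 ?e10 //.
by have := etrans T (esym E); move=> /eqP; rewrite !eqn_add2r eqn_mul2l /= => /eqP.
Qed.

Lemma card_two (A B : {set {set vec 10}}) a b d : a != b ->
  (forall W, W \in A -> sdim W = a) -> (forall W, W \in B -> sdim W = b) ->
  #|[set W in A :|: B | sdim W == d]| = ((if d == a then #|A| else 0) + (if d == b then #|B| else 0))%N.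
Proof.
move=> ab HA HB.
have -> : [set W in A :|: B | sdim W == d] = [set W in A | sdim W == d] :|: [set W in B | sdim W == d].
  by apply/setP => W; rewrite !inE andb_orl.
rewrite cardsU (_ : _ :&: _ = set0) ?cards0 ?subn0 ?(card_same d HA) ?(card_same d HB) //.
apply/setP => W; rewrite !inE; apply/negP => /andP [/andP [WA /eqP dA] /andP [WB _]].
by move: ab; rewrite -(HA W WA) -(HB W WB) eqxx.
Qed.

Lemma ex10 : exists P : {set {set vec 10}}, vs_partition P /\ has_type P [:: (10, 1)]%N.
Proof.
have Hs : forall W, W \in [set Img M10] -> sdim W = 10%N.
  by move=> W; rewrite inE => /eqP ->; apply: good_sdim M10_good.
apply: (build_exists (Wf := [set Img M10])) => //.
- by move=> W; rewrite inE => /eqP ->; exists 10%N => //; exact: M10_good.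
- by move=> W W' x; rewrite !inE => /eqP -> /eqP ->; rewrite eqxx.
all: rewrite ?(card_same _ Hs) ?cards1 /= ?big_cons ?big_nil //.
Qed.

Lemma ex8 : exists P : {set {set vec 10}}, vs_partition P /\ has_type P [:: (2, 256); (8, 1)]%N.
Proof.
have Hs : forall W, W \in [set Img M8] -> sdim W = 8%N.
  by move=> W; rewrite inE => /eqP ->; apply: good_sdim M8_good.
apply: (build_exists (Wf := [set Img M8])) => //.
- by move=> W; rewrite inE => /eqP ->; exists 8%N => //; exact: M8_good.
- by move=> W W' x; rewrite !inE => /eqP -> /eqP ->; rewrite eqxx.
all: rewrite ?(card_same _ Hs) ?cards1 /= ?big_cons ?big_nil //.
Qed.

Lemma M6_sdim : sdim (Img M6) = 6%N. Proof. exact: good_sdim M6_good. Qed.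
Lemma M4_sdim : sdim (Img M4) = 4%N. Proof. exact: good_sdim M4_good. Qed.

Lemma card_US i : (i <= 64)%N -> #|[set Uc c | c in S i]| = i.
Proof. by move=> hi; rewrite card_imset ?card_S //; exact: Uc_inj. Qed.

Lemma Uc_neq c c' : Uc c != Uc c' -> c != c'.
Proof. by apply: contra => /eqP ->. Qed.

Lemma ex6 i : (i <= 64)%N -> exists P : {set {set vec 10}},
  vs_partition P /\ has_type P [:: (2, 320 - 5 * i); (4, i); (6, 1)]%N.
Proof.
move=> hi.
have HA : forall W, W \in [set Img M6] -> sdim W = 6%N by move=> W; rewrite inE => /eqP ->; exact: M6_sdim.
have HB : forall W, W \in [set Uc c | c in S i] -> sdim W = 4%N by move=> W /imsetP [c _ ->]; exact: Uc_sdim.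
apply: (build_exists (Wf := [set Img M6] :|: [set Uc c | c in S i])) => //.
- move=> W; rewrite !inE => /orP [/eqP ->|/imsetP [c _ ->]].
    by exists 6%N => //; exact: M6_good.
  by exists 4%N => //; exact: Uc_good.
- move=> W W' x; rewrite !inE => /orP [/eqP ->|/imsetP [c _ ->]] /orP [/eqP ->|/imsetP [c' _ ->]].
  + by rewrite eqxx.
  + by move=> _ xM xU; exact: (W_disj M6_Pi xM xU).
  + by move=> _ xU xM; exact: (W_disj M6_Pi xM xU).
  + by move=> /Uc_neq cc; exact: Uc_disj.
all: rewrite ?(card_two _ (isT : 6%N != 4%N) HA HB) ?cards1 ?card_US //= ?big_cons ?big_nil /=.
all: lia.
Qed.

Lemma ex4 i : (i <= 65)%N -> exists P : {set {set vec 10}},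
  vs_partition P /\ has_type P [:: (2, 341 - 5 * i); (4, i)]%N.
Proof.
move=> hi; case: (boolP (i <= 64)%N) => hi'.
{ have HB : forall W, W \in [set Uc c | c in S i] -> sdim W = 4%N by move=> W /imsetP [c _ ->]; exact: Uc_sdim.
  apply: (build_exists (Wf := [set Uc c | c in S i])) => //.
  - by move=> W /imsetP [c _ ->]; exists 4%N => //; exact: Uc_good.
  - move=> W W' x /imsetP [c _ ->] /imsetP [c' _ ->].
    by move=> /Uc_neq cc; exact: Uc_disj.
  all: rewrite ?(card_same _ HB) ?card_US //= ?big_cons ?big_nil /=.
  all: lia. }
have -> : i = 65%N by lia.
set X := [set Uc c | c in S 64].
have HB : forall W, W \in Img M4 |: X -> sdim W = 4%N.
  by move=> W; rewrite !inE => /orP [/eqP ->|/imsetP [c _ ->]]; [exact: M4_sdim | exact: Uc_sdim].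
have HX : Img M4 \notin X.
  apply/imsetP => -[c _ E].
  have [x xM xn0] := good_nz (isT : (0 < 4)%N) M4_good.
  have xU : x \in Uc c by rewrite -E.
  by move/eqP: xn0; apply; exact: (W_disj M4_Pi xM xU).
have CX : #|Img M4 |: X| = 65%N by rewrite cardsU1 HX card_US.
apply: (build_exists (Wf := Img M4 |: X)) => //.
- move=> W; rewrite !inE => /orP [/eqP ->|/imsetP [c _ ->]].
    by exists 4%N => //; exact: M4_good.
  by exists 4%N => //; exact: Uc_good.
- move=> W W' x; rewrite !inE => /orP [/eqP ->|/imsetP [c _ ->]] /orP [/eqP ->|/imsetP [c' _ ->]].
  + by rewrite eqxx.
  + by move=> _ xM xU; exact: (W_disj M4_Pi xM xU).
  + by move=> _ xU xM; exact: (W_disj M4_Pi xM xU).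
  + by move=> /Uc_neq cc; exact: Uc_disj.
all: rewrite ?(card_same _ HB) ?CX //= ?big_cons ?big_nil /=.
all: lia.
Qed.

Local Close Scope ring_scope.

Theorem mainTheorem11 :
  (forall P : {set {set vec 10}},
     vs_partition P ->
     (forall A, A \in P -> ~~ odd (sdim A)) ->
     [\/ has_type P [:: (10, 1)],
         has_type P [:: (2, 256); (8, 1)],
         exists2 i, (i <= 64)%N & has_type P [:: (2, 320 - 5 * i); (4, i); (6, 1)]
       | exists2 i, (i <= 66)%N & has_type P [:: (2, 341 - 5 * i); (4, i)]]%N)
  /\
  [/\ exists P : {set {set vec 10}}, vs_partition P /\ has_type P [:: (10, 1)],
      exists P : {set {set vec 10}}, vs_partition P /\ has_type P [:: (2, 256); (8, 1)],
      (forall i, (i <= 64)%N ->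
         exists P : {set {set vec 10}},
           vs_partition P /\ has_type P [:: (2, 320 - 5 * i); (4, i); (6, 1)])
    & (forall i, (i <= 65)%N ->
         exists P : {set {set vec 10}},
           vs_partition P /\ has_type P [:: (2, 341 - 5 * i); (4, i)])]%N.
Proof.
split; first exact: classify.
split; [exact: ex10 | exact: ex8 | exact: ex6 | exact: ex4].
Qed.
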